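(* Let $I$ be a set, and for $n < \omega$ let $G_n \subseteq G_{n+1}$ be locally finite groups. For $t \in I$ and $n < \omega$ let $a^t_n \in G_{n+1}$ and $b^t_n = a^t_0 a^t_1 \cdots a^t_n$ (product in $G_{n+1}$); let $\bar a_n = \langle a^t_n : t \in I\rangle$ and $\bar b_n = \langle b^t_n : t \in I\rangle$. Assume: (α) for every $n$, $\mathrm{tp}_{\mathrm{bs}}(\bar a_n,G_n,G_{n+1}) \subseteq \mathrm{tp}_{\mathrm{bs}}(\bar a_{n+1},G_{n+1},G_{n+2})$ (both viewed as types in the variables $\langle x_t : t\in I\rangle$); (β) for every $n$, the subgroup of $G_{n+1}$ generated by $\{a^t_n : t \in I\}$ intersects $G_n$ in $\{e\}$; (e) each $a^t_n$ commutes with every element of $G_n$. Let $G_\omega = \bigcup_{n<\omega} G_n$. Then there are a locally finite group $G_{\omega+1}$ and elements $b^t_\omega$ ($t \in I$) such that $G_\omega \subseteq G_{\omega+1} = \langle G_\omega \cup \{b^t_\omega : t \in I\}\rangle$ and, with $\bar b_\omega = \langle b^t_\omega : t \in I\rangle$, for every $n < \omega$ we have $\mathrm{tp}_{\mathrm{bs}}(\bar b_\omega,G_n,G_{\omega+1}) = \mathrm{tp}_{\mathrm{bs}}(\bar b_n,G_n,G_{n+1})$.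
   Context: A group is locally finite if every finitely generated subgroup is finite. For $A \subseteq H$ and a (possibly infinite) tuple $\bar a = \langle a_t : t \in I\rangle$ from $H$, $\mathrm{tp}_{\mathrm{bs}}(\bar a,A,H)$ is the set of formulas $\sigma(\bar x,\bar c) = e$ and $\sigma(\bar x,\bar c) \neq e$, where $\sigma$ is a group word in finitely many of the variables $x_t$ ($t\in I$) and a finite tuple of further variables, and $\bar c$ is a finite tuple from $A$, which are satisfied in $H$ when $x_t$ is interpreted as $a_t$. *)

(* Defs.v *)
From Stdlib Require Import List.

Record group := Group {
  carrier :> Type;
  gmul : carrier -> carrier -> carrier;
  ginv : carrier -> carrier;
  gone : carrier;
  gmulA : forall x y z, gmul x (gmul y z) = gmul (gmul x y) z;
  gmul1 : forall x, gmul gone x = x;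
  gmulV : forall x, gmul (ginv x) x = gone
}.

Arguments gmul {g} _ _.
Arguments ginv {g} _.
Arguments gone {g}.

Inductive gen {H : group} (X : H -> Prop) : H -> Prop :=
| gen_base : forall x, X x -> gen X x
| gen_one : gen X gone
| gen_mul : forall x y, gen X x -> gen X y -> gen X (gmul x y)
| gen_inv : forall x, gen X x -> gen X (ginv x).

Definition is_subgroup {H : group} (S : H -> Prop) : Prop :=
  S gone /\ (forall x y, S x -> S y -> S (gmul x y)) /\ (forall x, S x -> S (ginv x)).

Definition locally_finite {H : group} (S : H -> Prop) : Prop :=
  forall l : list H, (forall x, In x l -> S x) ->
    exists s : list H, forall x, gen (fun y => In y l) x -> In x s.

Inductive word (X : Type) : Type :=
| wvar : X -> word X
| wone : word X
| wmul : word X -> word X -> word X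
| winv : word X -> word X.
Arguments wvar {X} _.
Arguments wone {X}.
Arguments wmul {X} _ _.
Arguments winv {X} _.

Fixpoint weval {X : Type} {H : group} (v : X -> H) (w : word X) : H :=
  match w with
  | wvar x => v x
  | wone => gone
  | wmul u u' => gmul (weval v u) (weval v u')
  | winv u => ginv (weval v u)
  end.

(* Variables: x_t (t : I) and parameter variables, instantiated by P-values. *)
Fixpoint params_in {I P : Type} (A : P -> Prop) (w : word (I + P)) : Prop :=
  match w with
  | wvar (inl _) => True
  | wvar (inr c) => A c
  | wone => True
  | wmul u u' => params_in A u /\ params_in A u'
  | winv u => params_in A u
  end.

(* A basic formula: (true, sigma) means sigma = e, (false, sigma) means sigma <> e. *)
Definition bformula (I P : Type) : Type := (bool * word (I + P))%type.

(* tp_bs(a, A, H): parameters range over P, with A a subset of P and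
   emb : P -> H interpreting the parameters inside H. *)
Definition tp_bs {I P : Type} {H : group} (a : I -> H) (A : P -> Prop) (emb : P -> H)
  (phi : bformula I P) : Prop :=
  params_in A (snd phi) /\
  let v := fun z => match z with inl t => a t | inr c => emb c end in
  if fst phi then weval v (snd phi) = gone else weval v (snd phi) <> gone.

Fixpoint bprod {I : Type} {H : group} (a : I -> nat -> H) (t : I) (n : nat) : H :=
  match n with
  | O => a t O
  | S m => gmul (bprod a t m) (a t (S m))
  end.

(* Main.v *)
Require Import Defs.
From Stdlib Require Import List Lia Classical ClassicalEpsilon FunctionalExtensionality PropExtensionality ProofIrrelevance.

Lemma gmulVr (H : group) (x : H) : gmul x (ginv x) = gone.
Proof.
  rewrite <- (gmul1 H (gmul x (ginv x))).
  rewrite <- (gmulV H (ginv x)) at 1.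
  rewrite <- gmulA. rewrite (gmulA H (ginv x) x (ginv x)).
  rewrite gmulV, gmul1. apply gmulV.
Qed.

Lemma gmul1r (H : group) (x : H) : gmul x gone = x.
Proof. rewrite <- (gmulV H x), gmulA, gmulVr, gmul1. reflexivity. Qed.

Lemma gmul_inv_uniq (H : group) (x y : H) : gmul x y = gone -> y = ginv x.
Proof.
  intro E. rewrite <- (gmul1 H y), <- (gmulV H x), <- gmulA, E, gmul1r. reflexivity.
Qed.

Lemma ginv_mul (H : group) (x y : H) : ginv (gmul x y) = gmul (ginv y) (ginv x).
Proof.
  symmetry. apply gmul_inv_uniq.
  rewrite <- gmulA. rewrite (gmulA H y (ginv y) (ginv x)), gmulVr, gmul1, gmulVr. reflexivity.
Qed.

Lemma ginv1 (H : group) : ginv (gone : H) = gone.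
Proof. symmetry. apply gmul_inv_uniq. apply gmul1. Qed.

Lemma ginvK (H : group) (x : H) : ginv (ginv x) = x.
Proof. symmetry. apply gmul_inv_uniq. apply gmulV. Qed.

Lemma eq_via_inv (H : group) (x y : H) : x = y <-> gmul x (ginv y) = gone.
Proof.
  split; intro E.
  - subst. apply gmulVr.
  - apply gmul_inv_uniq in E. rewrite <- (ginvK H y), E, ginvK. reflexivity.
Qed.

Lemma gen_comm (H : group) (S : H -> Prop) (u : H)
  (Hs : forall s, S s -> gmul s u = gmul u s) :
  forall v, gen S v -> gmul v u = gmul u v.
Proof.
  induction 1.
  - auto.
  - rewrite gmul1, gmul1r. reflexivity.
  - rewrite <- gmulA, IHgen2, gmulA, IHgen1, gmulA. reflexivity.
  - assert (E : gmul (ginv x) (gmul (gmul x u) (ginv x)) = gmul (ginv x) (gmul (gmul u x) (ginv x)))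
      by (rewrite IHgen; reflexivity).
    assert (L : gmul (ginv x) (gmul (gmul x u) (ginv x)) = gmul u (ginv x))
      by (rewrite gmulA, gmulA, gmulV, gmul1; reflexivity).
    assert (R : gmul (ginv x) (gmul (gmul u x) (ginv x)) = gmul (ginv x) u)
      by (rewrite <- (gmulA H u x), gmulVr, gmul1r; reflexivity).
    rewrite L, R in E. symmetry. exact E.
Qed.

Lemma weval_ext {X : Type} {H : group} (v v' : X -> H) (w : word X) :
  (forall z, v z = v' z) -> weval v w = weval v' w.
Proof. intro E; induction w; simpl; congruence. Qed.

Lemma params_mono {I P : Type} (A B : P -> Prop) (w : word (I + P)) :
  (forall x, A x -> B x) -> params_in A w -> params_in B w.
Proof.
  intro HAB; induction w as [[t|c]| |u IHu u' IHu'|u IHu]; simpl; intuition.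
Qed.

Lemma decomp {I : Type} {U : group} (A S : U -> Prop) (HA : is_subgroup A)
  (Hc : forall u s, A u -> S s -> gmul s u = gmul u s)
  (x y : I + U -> U) (Hxl : forall t, A (x (inl t))) (Hxr : forall c, x (inr c) = c)
  (Hy : forall z, gen S (y z)) (w : word (I + U)) (Hw : params_in A w) :
  A (weval x w) /\ gen S (weval y w) /\
  weval (fun z => gmul (x z) (y z)) w = gmul (weval x w) (weval y w).
Proof.
  destruct HA as [HA1 [HAm HAi]].
  assert (Hc' : forall u v, A u -> gen S v -> gmul v u = gmul u v)
    by (intros u v Hu Hv; apply (gen_comm U S u); auto).
  induction w as [[t|c]| |u IHu u' IHu'|u IHu]; simpl in *.
  - auto.
  - rewrite Hxr. auto.
  - split; [auto|split; [apply gen_one|]]. rewrite gmul1. reflexivity.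
  - destruct Hw as [H1 H2]. destruct (IHu H1) as [A1 [B1 E1]]. destruct (IHu' H2) as [A2 [B2 E2]].
    split; [auto|split; [apply gen_mul; auto|]].
    rewrite E1, E2. rewrite <- !gmulA. f_equal. rewrite !gmulA. f_equal. apply Hc'; auto.
  - destruct (IHu Hw) as [A1 [B1 E1]].
    split; [auto|split; [apply gen_inv; auto|]].
    rewrite E1, ginv_mul. apply Hc'; auto. apply gen_inv; auto.
Qed.

Lemma prod_one {U : group} (A S : U -> Prop) (HA : is_subgroup A)
  (Hb : forall v, gen S v -> A v -> v = gone) (u v : U) :
  A u -> gen S v -> gmul u v = gone -> u = gone /\ v = gone.
Proof.
  intros Hu Hv E. destruct HA as [HA1 [HAm HAi]].
  pose proof (gmul_inv_uniq _ _ _ E) as Ev.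
  assert (Hv0 : v = gone) by (apply Hb; auto; rewrite Ev; auto).
  rewrite Hv0, gmul1r in E. auto.
Qed.

Definition vm {I : Type} {U : group} (a : I -> nat -> U) (m : nat) (z : I + U) : U :=
  match z with inl t => bprod a t m | inr c => c end.
Definition alm {I : Type} {U : group} (a : I -> nat -> U) (m : nat) (z : I + U) : U :=
  match z with inl t => a t m | inr _ => gone end.
Definition piv {I : Type} {U : group} (z : I + U) : U :=
  match z with inl _ => gone | inr c => c end.

Fixpoint strip {I U : Type} (w : word (I + U)) : word (I + U) :=
  match w with
  | wvar (inl t) => wvar (inl t)
  | wvar (inr _) => wone
  | wone => wone
  | wmul u u' => wmul (strip u) (strip u')
  | winv u => winv (strip u)
  end.

Lemma strip_params {I U : Type} (A : U -> Prop) (w : word (I + U)) : params_in A (strip w).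
Proof. induction w as [[t|c]| |u IHu u' IHu'|u IHu]; simpl; auto. Qed.

Lemma weval_strip {I : Type} {U : group} (v : I + U -> U) (w : word (I + U)) :
  weval v (strip w) = weval (fun z => match z with inl t => v (inl t) | inr _ => gone end) w.
Proof. induction w as [[t|c]| |u IHu u' IHu'|u IHu]; simpl; congruence. Qed.

Lemma G_mono {U : group} (G : nat -> U -> Prop) (HGinc : forall n x, G n x -> G (S n) x) :
  forall n m x, n <= m -> G n x -> G m x.
Proof. intros n m x Hle; induction Hle; auto. Qed.

Lemma bprod_G {I : Type} {U : group} (G : nat -> U -> Prop) (a : I -> nat -> U)
  (HGsub : forall n, is_subgroup (G n))
  (HGinc : forall n x, G n x -> G (S n) x)
  (Ha : forall t n, G (S n) (a t n)) : forall t m, G (S m) (bprod a t m).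
Proof.
  intros t m; induction m; simpl; auto.
  destruct (HGsub (S (S m))) as [_ [Hm _]]. apply Hm; auto.
Qed.

Lemma alpha_step {I : Type} {U : group} (G : nat -> U -> Prop) (a : I -> nat -> U)
  (Halpha : forall n (phi : bformula I U),
      tp_bs (fun t => a t n) (G n) (fun x => x) phi ->
      tp_bs (fun t => a t (S n)) (G (S n)) (fun x => x) phi) :
  forall n w, weval (alm a n) w = gone -> weval (alm a (S n)) w = gone.
Proof.
  intros n w E.
  destruct (Halpha n (true, strip w)) as [_ E'].
  - split; [apply strip_params|]. simpl. rewrite weval_strip.
    transitivity (weval (alm a n) w); [|exact E].
    apply weval_ext. intros [t|c]; reflexivity.
  - simpl in E'. rewrite weval_strip in E'. rewrite <- E'.
    apply weval_ext. intros [t|c]; reflexivity.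
Qed.

Lemma split_step {I : Type} {U : group} (G : nat -> U -> Prop) (a : I -> nat -> U)
  (HGsub : forall n, is_subgroup (G n))
  (HGinc : forall n x, G n x -> G (S n) x)
  (Ha : forall t n, G (S n) (a t n))
  (He : forall t n g, G n g -> gmul (a t n) g = gmul g (a t n)) :
  forall k w, params_in (G (S k)) w ->
  G (S k) (weval (vm a k) w) /\ gen (fun y => exists t, y = a t (S k)) (weval (alm a (S k)) w) /\
  weval (vm a (S k)) w = gmul (weval (vm a k) w) (weval (alm a (S k)) w).
Proof.
  intros k w Hw.
  destruct (decomp (G (S k)) (fun y => exists t, y = a t (S k)) (HGsub (S k))
     ltac:(intros u s Hu [t ->]; apply He; auto)
     (vm a k) (alm a (S k))
     ltac:(intros t; simpl; apply bprod_G; auto)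
     ltac:(intros c; reflexivity)
     ltac:(intros [t|c]; simpl; [apply gen_base; eauto| apply gen_one])
     w Hw) as [H1 [H2 H3]].
  split; auto. split; auto. rewrite <- H3. apply weval_ext. intros [t|c]; simpl; auto.
  symmetry; apply gmul1r.
Qed.

Lemma Qlem {I : Type} {U : group} (G : nat -> U -> Prop) (a : I -> nat -> U)
  (HGsub : forall n, is_subgroup (G n))
  (HGinc : forall n x, G n x -> G (S n) x)
  (Ha : forall t n, G (S n) (a t n))
  (Hbeta : forall n x, gen (fun y => exists t, y = a t n) x -> G n x -> x = gone)
  (He : forall t n g, G n g -> gmul (a t n) g = gmul g (a t n)) :
  forall m w, params_in (G m) w -> weval (vm a m) w = gone -> weval (alm a m) w = gone.
Proof.
  intros [|k] w Hw E.
  - destruct (decomp (G 0) (fun y => exists t, y = a t 0) (HGsub 0)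
     ltac:(intros u s Hu [t ->]; apply He; auto)
     piv (alm a 0)
     ltac:(intros t; simpl; apply (HGsub 0))
     ltac:(intros c; reflexivity)
     ltac:(intros [t|c]; simpl; [apply gen_base; eauto| apply gen_one])
     w Hw) as [H1 [H2 H3]].
    assert (E2 : weval (fun z => gmul (piv z) (alm a 0 z)) w = gone).
    { rewrite <- E. apply weval_ext. intros [t|c]; simpl; [apply gmul1|apply gmul1r]. }
    rewrite H3 in E2.
    destruct (prod_one (G 0) _ (HGsub 0) (Hbeta 0) _ _ H1 H2 E2). auto.
  - destruct (split_step G a HGsub HGinc Ha He k w Hw) as [H1 [H2 H3]].
    rewrite H3 in E.
    destruct (prod_one (G (S k)) _ (HGsub (S k)) (Hbeta (S k)) _ _ H1 H2 E). auto.
Qed.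

Lemma stab1 {I : Type} {U : group} (G : nat -> U -> Prop) (a : I -> nat -> U)
  (HGsub : forall n, is_subgroup (G n))
  (HGinc : forall n x, G n x -> G (S n) x)
  (Ha : forall t n, G (S n) (a t n))
  (Halpha : forall n (phi : bformula I U),
      tp_bs (fun t => a t n) (G n) (fun x => x) phi ->
      tp_bs (fun t => a t (S n)) (G (S n)) (fun x => x) phi)
  (Hbeta : forall n x, gen (fun y => exists t, y = a t n) x -> G n x -> x = gone)
  (He : forall t n g, G n g -> gmul (a t n) g = gmul g (a t n)) :
  forall m w, params_in (G m) w ->
    (weval (vm a (S m)) w = gone <-> weval (vm a m) w = gone).
Proof.
  intros m w Hw.
  assert (Hw' : params_in (G (S m)) w) by (apply (params_mono (G m)); auto).
  destruct (split_step G a HGsub HGinc Ha He m w Hw') as [H1 [H2 H3]].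
  rewrite H3. split; intro E.
  - destruct (prod_one (G (S m)) _ (HGsub (S m)) (Hbeta (S m)) _ _ H1 H2 E). auto.
  - rewrite E, (alpha_step G a Halpha m w), gmul1; auto.
    apply (Qlem G a HGsub HGinc Ha Hbeta He); auto.
Qed.

Lemma stab {I : Type} {U : group} (G : nat -> U -> Prop) (a : I -> nat -> U)
  (HGsub : forall n, is_subgroup (G n))
  (HGinc : forall n x, G n x -> G (S n) x)
  (Ha : forall t n, G (S n) (a t n))
  (Halpha : forall n (phi : bformula I U),
      tp_bs (fun t => a t n) (G n) (fun x => x) phi ->
      tp_bs (fun t => a t (S n)) (G (S n)) (fun x => x) phi)
  (Hbeta : forall n x, gen (fun y => exists t, y = a t n) x -> G n x -> x = gone)
  (He : forall t n g, G n g -> gmul (a t n) g = gmul g (a t n)) :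
  forall n m w, n <= m -> params_in (G n) w ->
    (weval (vm a m) w = gone <-> weval (vm a n) w = gone).
Proof.
  intros n m w Hle Hw. induction Hle.
  - tauto.
  - rewrite <- IHHle. apply (stab1 G a HGsub HGinc Ha Halpha Hbeta He).
    apply (params_mono (G n)); auto. intros x; apply (G_mono G HGinc); auto.
Qed.

Definition eqv {I : Type} {U : group} (a : I -> nat -> U) (w w' : word (I + U)) : Prop :=
  exists N, forall m, N <= m -> weval (vm a m) w = weval (vm a m) w'.

Lemma eqv_refl {I : Type} {U : group} (a : I -> nat -> U) w : eqv a w w.
Proof. exists 0; auto. Qed.
Lemma eqv_sym {I : Type} {U : group} (a : I -> nat -> U) w w' : eqv a w w' -> eqv a w' w.
Proof. intros [N HN]; exists N; intros; symmetry; auto. Qed.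
Lemma eqv_trans {I : Type} {U : group} (a : I -> nat -> U) w1 w2 w3 :
  eqv a w1 w2 -> eqv a w2 w3 -> eqv a w1 w3.
Proof. intros [N HN] [M HM]; exists (N + M); intros m Hm. rewrite HN, HM; auto; lia. Qed.
Lemma eqv_mul {I : Type} {U : group} (a : I -> nat -> U) w1 w2 w3 w4 :
  eqv a w1 w2 -> eqv a w3 w4 -> eqv a (wmul w1 w3) (wmul w2 w4).
Proof. intros [N HN] [M HM]; exists (N + M); intros m Hm. simpl. rewrite HN, HM; auto; lia. Qed.
Lemma eqv_inv {I : Type} {U : group} (a : I -> nat -> U) w1 w2 :
  eqv a w1 w2 -> eqv a (winv w1) (winv w2).
Proof. intros [N HN]; exists N; intros m Hm. simpl. rewrite HN; auto. Qed.
Lemma eqv_all {I : Type} {U : group} (a : I -> nat -> U) w w' :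
  (forall m, weval (vm a m) w = weval (vm a m) w') -> eqv a w w'.
Proof. intros H; exists 0; auto. Qed.

Lemma eqv_fun {I : Type} {U : group} (a : I -> nat -> U) w w' :
  eqv a w = eqv a w' <-> eqv a w w'.
Proof.
  split.
  - intros E. assert (H : eqv a w' w') by apply eqv_refl. rewrite <- E in H. exact H.
  - intros H. apply functional_extensionality; intro z. apply propositional_extensionality.
    split; intro H'.
    + eapply eqv_trans; [apply eqv_sym; exact H| exact H'].
    + eapply eqv_trans; [exact H| exact H'].
Qed.

Definition Gom {U : group} (G : nat -> U -> Prop) (x : U) : Prop := exists n, G n x.

Definition Vcar (I : Type) (U : group) (G : nat -> U -> Prop) (a : I -> nat -> U) : Type :=
  {P : word (I + U) -> Prop | exists w, params_in (Gom G) w /\ P = eqv a w}.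

Definition Vrep {I : Type} {U : group} {G : nat -> U -> Prop} {a : I -> nat -> U} (X : Vcar I U G a) : word (I + U) :=
  proj1_sig (constructive_indefinite_description _ (proj2_sig X)).
Lemma Vrep_spec {I : Type} {U : group} {G : nat -> U -> Prop} {a : I -> nat -> U} (X : Vcar I U G a) :
  params_in (Gom G) (Vrep X) /\ proj1_sig X = eqv a (Vrep X).
Proof. exact (proj2_sig (constructive_indefinite_description _ (proj2_sig X))). Qed.

Definition Vmk {I : Type} {U : group} {G : nat -> U -> Prop} {a : I -> nat -> U} (w : word (I + U)) (H : params_in (Gom G) w) : Vcar I U G a :=
  exist _ (eqv a w) (ex_intro _ w (conj H eq_refl)).

Lemma V_ext {I : Type} {U : group} {G : nat -> U -> Prop} {a : I -> nat -> U} (X Y : Vcar I U G a) : proj1_sig X = proj1_sig Y -> X = Y.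
Proof.
  destruct X as [P p], Y as [Q q]; simpl; intros ->. f_equal. apply proof_irrelevance.
Qed.

Lemma mk_eq_iff {I : Type} {U : group} {G : nat -> U -> Prop} {a : I -> nat -> U} w w' H H' : @Vmk I U G a w H = @Vmk I U G a w' H' <-> eqv a w w'.
Proof.
  split.
  - intros E. apply (f_equal (@proj1_sig _ _)) in E. simpl in E. apply eqv_fun; auto.
  - intros E. apply V_ext. simpl. apply eqv_fun; auto.
Qed.

Lemma mk_rep {I : Type} {U : group} {G : nat -> U -> Prop} {a : I -> nat -> U} (X : Vcar I U G a) H : X = Vmk (Vrep X) H.
Proof. apply V_ext. simpl. apply (Vrep_spec X). Qed.

Lemma rep_mk {I : Type} {U : group} {G : nat -> U -> Prop} {a : I -> nat -> U} w H : eqv a (Vrep (@Vmk I U G a w H)) w.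
Proof.
  destruct (Vrep_spec (@Vmk I U G a w H)) as [_ E]. simpl in E. apply eqv_fun. auto.
Qed.

Definition Vmul {I : Type} {U : group} {G : nat -> U -> Prop} {a : I -> nat -> U} (X Y : Vcar I U G a) : Vcar I U G a :=
  Vmk (wmul (Vrep X) (Vrep Y)) (conj (proj1 (Vrep_spec X)) (proj1 (Vrep_spec Y))).
Definition Vinv {I : Type} {U : group} {G : nat -> U -> Prop} {a : I -> nat -> U} (X : Vcar I U G a) : Vcar I U G a :=
  Vmk (winv (Vrep X)) (proj1 (Vrep_spec X)).
Definition Vone {I : Type} {U : group} {G : nat -> U -> Prop} {a : I -> nat -> U} : Vcar I U G a := Vmk wone Logic.I.

Lemma mul_mk {I : Type} {U : group} {G : nat -> U -> Prop} {a : I -> nat -> U} w1 w2 H1 H2 :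
  Vmul (@Vmk I U G a w1 H1) (Vmk w2 H2) = Vmk (wmul w1 w2) (conj H1 H2).
Proof. apply mk_eq_iff. apply eqv_mul; apply rep_mk. Qed.
Lemma inv_mk {I : Type} {U : group} {G : nat -> U -> Prop} {a : I -> nat -> U} w1 H1 :
  Vinv (@Vmk I U G a w1 H1) = Vmk (winv w1) H1.
Proof. apply mk_eq_iff. apply eqv_inv; apply rep_mk. Qed.

Lemma VmulA {I : Type} {U : group} {G : nat -> U -> Prop} {a : I -> nat -> U} (X Y Z : Vcar I U G a) : Vmul X (Vmul Y Z) = Vmul (Vmul X Y) Z.
Proof.
  destruct (Vrep_spec X) as [HX _], (Vrep_spec Y) as [HY _], (Vrep_spec Z) as [HZ _].
  rewrite (mk_rep X HX), (mk_rep Y HY), (mk_rep Z HZ).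
  rewrite !mul_mk.
  apply mk_eq_iff, eqv_all. intros m; simpl. apply gmulA.
Qed.

Lemma Vmul1 {I : Type} {U : group} {G : nat -> U -> Prop} {a : I -> nat -> U} (X : Vcar I U G a) :
  Vmul Vone X = X.
Proof.
  destruct (Vrep_spec X) as [HX _]. rewrite (mk_rep X HX). unfold Vone. rewrite mul_mk.
  apply mk_eq_iff, eqv_all. intros m; simpl. apply gmul1.
Qed.
Lemma VmulV {I : Type} {U : group} {G : nat -> U -> Prop} {a : I -> nat -> U} (X : Vcar I U G a) :
  Vmul (Vinv X) X = Vone.
Proof.
  destruct (Vrep_spec X) as [HX _]. rewrite (mk_rep X HX). rewrite inv_mk, mul_mk.
  apply mk_eq_iff, eqv_all. intros m; simpl. apply gmulV.
Qed.

Definition Vgroup (I : Type) (U : group) (G : nat -> U -> Prop) (a : I -> nat -> U) : group :=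
  Group (Vcar I U G a) Vmul Vinv Vone VmulA Vmul1 VmulV.

Definition fV (I : Type) (U : group) (G : nat -> U -> Prop) (a : I -> nat -> U) (x : U) : Vgroup I U G a :=
  match excluded_middle_informative (Gom G x) with
  | left H => @Vmk I U G a (wvar (inr x)) H
  | right _ => Vone
  end.
Definition bV (I : Type) (U : group) (G : nat -> U -> Prop) (a : I -> nat -> U) (t : I) : Vgroup I U G a :=
  @Vmk I U G a (wvar (inl t)) Logic.I.

Lemma fV_mk I U G a x (H : Gom G x) : fV I U G a x = Vmk (wvar (inr x)) H.
Proof.
  unfold fV. destruct (excluded_middle_informative (Gom G x)) as [H'|H'].
  - apply mk_eq_iff, eqv_refl.
  - contradiction.
Qed.

Lemma weval_V I U G a w (H : params_in (Gom G) w) :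
  weval (fun z => match z with inl t => bV I U G a t | inr c => fV I U G a c end) w = Vmk w H.
Proof.
  induction w as [[t|c]| |u IHu u' IHu'|u IHu].
  - simpl. apply mk_eq_iff, eqv_refl.
  - simpl. apply fV_mk.
  - simpl. apply mk_eq_iff, eqv_refl.
  - destruct H as [H1 H2]. cbn [weval]. change (@gmul (Vgroup I U G a)) with (@Vmul I U G a).
    rewrite (IHu H1), (IHu' H2). apply mul_mk.
  - cbn [weval]. change (@ginv (Vgroup I U G a)) with (@Vinv I U G a).
    rewrite (IHu H). apply inv_mk.
Qed.

Lemma params_bound {I : Type} {U : group} (G : nat -> U -> Prop)
  (HGinc : forall n x, G n x -> G (S n) x) (w : word (I + U)) :
  params_in (Gom G) w -> exists N, params_in (G N) w.
Proof.
  induction w as [[t|c]| |u IHu u' IHu'|u IHu]; simpl.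
  - exists 0; auto.
  - intros [n Hn]; exists n; auto.
  - exists 0; auto.
  - intros [H1 H2]. destruct (IHu H1) as [N1 P1], (IHu' H2) as [N2 P2].
    exists (N1 + N2). split.
    + apply (params_mono (G N1)); auto. intros x; apply (G_mono G HGinc); lia.
    + apply (params_mono (G N2)); auto. intros x; apply (G_mono G HGinc); lia.
  - auto.
Qed.

Lemma weval_vm_G {I : Type} {U : group} (G : nat -> U -> Prop) (a : I -> nat -> U)
  (HGsub : forall n, is_subgroup (G n))
  (HGinc : forall n x, G n x -> G (S n) x)
  (Ha : forall t n, G (S n) (a t n)) N w :
  params_in (G (S N)) w -> G (S N) (weval (vm a N) w).
Proof.
  destruct (HGsub (S N)) as [H1 [Hm Hi]].
  induction w as [[t|c]| |u IHu u' IHu'|u IHu]; simpl; intuition.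
  apply bprod_G; auto.
Qed.

Lemma eqv_iff {I : Type} {U : group} (G : nat -> U -> Prop) (a : I -> nat -> U)
  (HGsub : forall n, is_subgroup (G n))
  (HGinc : forall n x, G n x -> G (S n) x)
  (Ha : forall t n, G (S n) (a t n))
  (Halpha : forall n (phi : bformula I U),
      tp_bs (fun t => a t n) (G n) (fun x => x) phi ->
      tp_bs (fun t => a t (S n)) (G (S n)) (fun x => x) phi)
  (Hbeta : forall n x, gen (fun y => exists t, y = a t n) x -> G n x -> x = gone)
  (He : forall t n g, G n g -> gmul (a t n) g = gmul g (a t n))
  n w w' : params_in (G n) w -> params_in (G n) w' ->
  (eqv a w w' <-> weval (vm a n) w = weval (vm a n) w').
Proof.
  intros Hw Hw'.
  assert (Hp : params_in (G n) (wmul w (winv w'))) by (simpl; auto).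
  pose proof (stab G a HGsub HGinc Ha Halpha Hbeta He n) as St.
  split.
  - intros [N HN]. specialize (HN (N + n) ltac:(lia)).
    apply eq_via_inv in HN. apply eq_via_inv.
    apply (St (N + n) (wmul w (winv w'))); auto. lia.
  - intros E. exists n. intros m Hm. apply eq_via_inv.
    apply eq_via_inv in E.
    apply (St m (wmul w (winv w'))); auto.
Qed.

Lemma V_lf {I : Type} {U : group} (G : nat -> U -> Prop) (a : I -> nat -> U)
  (HGsub : forall n, is_subgroup (G n))
  (HGinc : forall n x, G n x -> G (S n) x)
  (HGlf : forall n, locally_finite (G n))
  (Ha : forall t n, G (S n) (a t n))
  (Halpha : forall n (phi : bformula I U),
      tp_bs (fun t => a t n) (G n) (fun x => x) phi ->
      tp_bs (fun t => a t (S n)) (G (S n)) (fun x => x) phi)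
  (Hbeta : forall n x, gen (fun y => exists t, y = a t n) x -> G n x -> x = gone)
  (He : forall t n g, G n g -> gmul (a t n) g = gmul g (a t n)) :
  locally_finite (fun _ : Vgroup I U G a => True).
Proof.
  intros l _.
  assert (HN : exists N, forall X, In X l -> params_in (G N) (@Vrep I U G a X)).
  { clear -HGinc. induction l as [|X l IH].
    - exists 0; intros ? [].
    - destruct IH as [N HN].
      destruct (params_bound G HGinc (Vrep X) (proj1 (Vrep_spec X))) as [M HM].
      exists (N + M). intros Y [<-|HY].
      + apply (params_mono (G M)); auto. intros x; apply (G_mono G HGinc); lia.
      + apply (params_mono (G N)); auto. intros x; apply (G_mono G HGinc); lia. }
  destruct HN as [N HN].
  set (LU := map (fun X => weval (vm a N) (@Vrep I U G a X)) l).
  destruct (HGlf (S N) LU) as [sU HsU].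
  { intros x Hx. apply in_map_iff in Hx. destruct Hx as [X [<- HX]].
    apply weval_vm_G; auto. apply (params_mono (G N)); auto. }
  pose (pGom := fun (w : word (I + U)) (Hw : params_in (G N) w) =>
          @params_mono I U (G N) (Gom G) w (fun x Hx => ex_intro _ N Hx) Hw).
  pose (g := fun u => match excluded_middle_informative
                 (exists w, params_in (G N) w /\ weval (vm a N) w = u) with
          | left E => @Vmk I U G a (proj1_sig (constructive_indefinite_description _ E))
                        (pGom _ (proj1 (proj2_sig (constructive_indefinite_description _ E))))
          | right _ => Vone end).
  exists (map g sU).
  assert (Claim : forall Y : Vgroup I U G a, gen (fun y => In y l) Y ->
     exists w, params_in (G N) w /\ (forall H, Y = @Vmk I U G a w H) /\
               gen (fun y => In y LU) (weval (vm a N) w)).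
  { induction 1 as [Y HY| |Y1 Y2 _ IH1 _ IH2|Y _ IH].
    - exists (Vrep Y). split; [auto|split].
      + intros H; apply mk_rep.
      + apply gen_base. apply in_map_iff. eauto.
    - exists wone. split; [exact Logic.I|split].
      + intros H. apply mk_eq_iff, eqv_refl.
      + apply gen_one.
    - destruct IH1 as [w1 [P1 [E1 G1]]], IH2 as [w2 [P2 [E2 G2]]].
      exists (wmul w1 w2). split; [split; auto|split].
      + intros [H1 H2]. change (@gmul (Vgroup I U G a) Y1 Y2) with (@Vmul I U G a Y1 Y2).
        rewrite (E1 H1), (E2 H2). apply mul_mk.
      + simpl. apply gen_mul; auto.
    - destruct IH as [w1 [P1 [E1 G1]]].
      exists (winv w1). split; [exact P1|split].
      + intros H1. change (@ginv (Vgroup I U G a) Y) with (@Vinv I U G a Y).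
        rewrite (E1 H1). apply inv_mk.
      + simpl. apply gen_inv; auto. }
  intros Y HY. destruct (Claim Y HY) as [w [Pw [Ew Gw]]].
  apply in_map_iff. exists (weval (vm a N) w). split; [|apply HsU; auto].
  unfold g. destruct (excluded_middle_informative _) as [E|E].
  - destruct (constructive_indefinite_description _ E) as [w' [Pw' Ew']]. simpl.
    rewrite (Ew (pGom w Pw)). apply mk_eq_iff.
    apply (eqv_iff G a HGsub HGinc Ha Halpha Hbeta He N); auto.
  - exfalso; apply E; eauto.
Qed.

Theorem claim2p20 (I : Type) (U : group) (G : nat -> U -> Prop)
  (a : I -> nat -> U)
  (HGsub : forall n, is_subgroup (G n))
  (HGinc : forall n x, G n x -> G (S n) x)
  (HGlf : forall n, locally_finite (G n))
  (Ha : forall t n, G (S n) (a t n))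
  (Halpha : forall n (phi : bformula I U),
      tp_bs (fun t => a t n) (G n) (fun x => x) phi ->
      tp_bs (fun t => a t (S n)) (G (S n)) (fun x => x) phi)
  (Hbeta : forall n x, gen (fun y => exists t, y = a t n) x -> G n x -> x = gone)
  (He : forall t n g, G n g -> gmul (a t n) g = gmul g (a t n)) :
  let Gomega := fun x : U => exists n, G n x in
  exists (V : group) (f : U -> V) (bomega : I -> V),
    locally_finite (fun _ : V => True) /\
    (forall x y, Gomega x -> Gomega y -> f x = f y -> x = y) /\
    (forall x y, Gomega x -> Gomega y -> f (gmul x y) = gmul (f x) (f y)) /\
    (forall z : V, gen (fun y => (exists x, Gomega x /\ y = f x) \/
                                 (exists t, y = bomega t)) z) /\
    (forall n (phi : bformula I U),
        tp_bs bomega (G n) f phi <-> tp_bs (fun t => bprod a t n) (G n) (fun x => x) phi).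
Proof.
  intros Gomega. exists (Vgroup I U G a), (fV I U G a), (bV I U G a).
  split; [apply V_lf; auto|].
  split.
  { intros x y Hx Hy E. rewrite (fV_mk _ _ _ _ x Hx), (fV_mk _ _ _ _ y Hy) in E.
    apply mk_eq_iff in E. destruct E as [N HN]. exact (HN N (le_n N)). }
  split.
  { intros x y [n Hx] [m Hy].
    assert (Hxy : Gom G (gmul x y)).
    { exists (n + m). destruct (HGsub (n + m)) as [_ [Hm _]]. apply Hm;
      [apply (G_mono G HGinc n)|apply (G_mono G HGinc m)]; auto; lia. }
    rewrite (fV_mk _ _ _ _ _ Hxy), (fV_mk _ _ _ _ x (ex_intro _ n Hx)),
      (fV_mk _ _ _ _ y (ex_intro _ m Hy)).
    change (@gmul (Vgroup I U G a)) with (@Vmul I U G a). rewrite mul_mk.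
    apply mk_eq_iff, eqv_all. intros; reflexivity. }
  split.
  { intros z. destruct (Vrep_spec z) as [Hz _]. rewrite (mk_rep z Hz).
    generalize (Vrep z) Hz. clear z Hz.
    induction w as [[t|c]| |u IHu u' IHu'|u IHu]; intros H.
    - apply gen_base. right. exists t. apply mk_eq_iff, eqv_refl.
    - apply gen_base. left. exists c. split; [exact H|]. symmetry; apply fV_mk.
    - assert (E : @Vmk I U G a wone H = (gone : Vgroup I U G a)) by (apply mk_eq_iff, eqv_refl).
      rewrite E. apply gen_one.
    - destruct H as [H1 H2]. rewrite <- (mul_mk u u' H1 H2). apply (@gen_mul (Vgroup I U G a)); auto.
    - rewrite <- (inv_mk u H). apply (@gen_inv (Vgroup I U G a)); auto. }
  intros n [b w]. unfold tp_bs. cbn [fst snd].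
  assert (Ev : weval (fun z => match z with inl t => bprod a t n | inr c => c end) w
               = weval (vm a n) w) by reflexivity.
  split; intros [Hp Hv]; split; auto;
    pose proof (@params_mono I U (G n) (Gom G) w (fun x Hx => ex_intro _ n Hx) Hp) as Hg;
    rewrite (weval_V I U G a w Hg) in *; rewrite Ev in *;
    assert (Ee : @Vmk I U G a w Hg = (gone : Vgroup I U G a) <-> weval (vm a n) w = gone)
      by (change (@Vmk I U G a w Hg = @Vmk I U G a wone Logic.I <-> weval (vm a n) w = weval (vm a n) wone);
          rewrite mk_eq_iff; apply (eqv_iff G a HGsub HGinc Ha Halpha Hbeta He n); simpl; auto);
    destruct b; tauto.
Qed.
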